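(* Let $G$ be a bridgeless cubic graph and let $H\subseteq G$ be an (induced) subgraph with $|\delta_G(H)|=6$. Then either $H$ has a perfect matching, or $H$ contains an independent set $S$ of vertices, each of valency $3$ in $H$, such that (i) every component of $H-S$ has an odd number of vertices, (ii) the number of components of $H-S$ with an odd number of vertices equals $|S|+2$, and (iii) $|\delta_G(L)|=3$ for each component $L$ of $H-S$.
   Context: Graphs may have multiple edges and loops. For a subgraph $H$ of $G$, $\delta_G(H)$ denotes the set of edges of $G$ with exactly one end in $V(H)$. *)

(* Defs.v *)
From mathcomp Require Import all_boot.
Set Implicit Arguments. Unset Strict Implicit. Unset Printing Implicit Defensive.

(* A finite multigraph (multiple edges and loops allowed): vertex type V,
   edge type E, each edge e has endpoints [src e] and [tgt e]
   (a loop has src e = tgt e). *)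
Section Multigraph.
Variables (V E : finType) (src tgt : E -> V).

Definition links (e : E) (x y : V) : bool :=
  ((src e == x) && (tgt e == y)) || ((src e == y) && (tgt e == x)).

(* degree of v in the subgraph induced by X (a loop counts twice) *)
Definition deg_in (X : {set V}) (v : V) : nat :=
  \sum_(e : E | (src e \in X) && (tgt e \in X)) ((src e == v) + (tgt e == v)).

Definition cubic : Prop := forall v : V, deg_in setT v = 3.

Definition adj_minus (e : E) : rel V :=
  fun x y => [exists f : E, (f != e) && links f x y].

Definition bridge (e : E) : bool := ~~ connect (adj_minus e) (src e) (tgt e).

Definition bridgeless : Prop := forall e : E, ~~ bridge e.

Definition cut (X : {set V}) : {set E} :=
  [set e | (src e \in X) != (tgt e \in X)].

Definition adj_in (Y : {set V}) : rel V :=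
  fun x y => (x \in Y) && (y \in Y) && [exists f : E, links f x y].

Definition comp_of (Y : {set V}) (v : V) : {set V} :=
  [set w in Y | connect (adj_in Y) v w].

Definition components (Y : {set V}) : {set {set V}} :=
  [set comp_of Y v | v in Y].

Definition has_perfect_matching (X : {set V}) : Prop :=
  exists M : {set E},
    (forall e, e \in M -> [/\ src e \in X, tgt e \in X & src e != tgt e]) /\
    (forall v, v \in X -> #|[set e in M | (src e == v) || (tgt e == v)]| = 1).

Definition independent (S : {set V}) : Prop :=
  forall e : E, ~~ ((src e \in S) && (tgt e \in S)).

End Multigraph.

(* Main.v *)
Require Import Defs.
From mathcomp Require Import all_boot.
From mathcomp Require Import zify.
From Stdlib Require Import Classical.
Set Implicit Arguments. Unset Strict Implicit. Unset Printing Implicit Defensive.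

Section Generic.
Variable V : finType.

Lemma closure_connect (e : rel V) (P : pred V) x y :
  (forall u w, P u -> e u w -> P w) -> P x -> connect e x y -> P y.
Proof.
move=> cl Px /connectP [p pp ->]; elim: p x Px pp => //= z p IH x Px /andP[exz pz].
exact: IH (cl _ _ Px exz) pz.
Qed.

Variable r : rel V.
Hypothesis rsym : symmetric r.
Implicit Types Y : {set V}.

Definition adjr (Y : {set V}) : rel V := fun x y => (x \in Y) && (y \in Y) && r x y.
Definition compr (Y : {set V}) (v : V) : {set V} := [set w in Y | connect (adjr Y) v w].
Definition compsr (Y : {set V}) : {set {set V}} := [set compr Y v | v in Y].
Definition oddc (Y : {set V}) := #|[set K in compsr Y | odd #|K|]|.

Lemma adjr_sym Y : symmetric (adjr Y).
Proof. by move=> x y; rewrite /adjr rsym; case: (x \in Y); case: (y \in Y). Qed.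

Lemma compr_sub (Y : {set V}) v : compr Y v \subset Y.
Proof. by apply/subsetP=> w; rewrite inE => /andP[]. Qed.

Lemma compr_self Y v : v \in Y -> v \in compr Y v.
Proof. by move=> vY; rewrite inE vY connect0. Qed.

Lemma compr_eq Y v u : u \in compr Y v -> compr Y u = compr Y v.
Proof.
rewrite inE => /andP[uY cvu]; apply/setP=> w; rewrite !inE.
case: (w \in Y) => //=; apply/idP/idP => [cuw|cvw].
  exact: connect_trans cvu cuw.
by apply: connect_trans cvw; rewrite (sym_connect_sym (adjr_sym Y)).
Qed.

Lemma comps_mem Y K u : K \in compsr Y -> u \in K -> K = compr Y u.
Proof. by move=> /imsetP[v _ ->] uK; rewrite (compr_eq uK). Qed.

Lemma comps_sub Y K : K \in compsr Y -> K \subset Y.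
Proof. by move=> /imsetP[v _ ->]; apply: compr_sub. Qed.

Lemma comps_n0 Y K : K \in compsr Y -> exists u, u \in K.
Proof. by move=> /imsetP[v vY ->]; exists v; apply: compr_self. Qed.

Lemma comps_inter Y K K' u : K \in compsr Y -> K' \in compsr Y -> u \in K -> u \in K' -> K = K'.
Proof. by move=> KY K'Y uK uK'; rewrite (comps_mem KY uK) (comps_mem K'Y uK'). Qed.

Lemma comps_disj Y K K' : K \in compsr Y -> K' \in compsr Y -> K != K' -> [disjoint K & K'].
Proof.
move=> KY K'Y neq; rewrite -setI_eq0; apply/eqP/setP => u; rewrite !inE.
apply/negP => /andP[uK uK'].
by rewrite (comps_inter KY K'Y uK uK') eqxx in neq.
Qed.

Lemma comp_closed Y K u w : K \in compsr Y -> u \in K -> w \in Y -> r u w -> w \in K.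
Proof.
move=> KY uK wY ruw; rewrite (comps_mem KY uK) inE wY /=.
apply: connect1; rewrite /adjr wY ruw andbT.
by rewrite (subsetP (comps_sub KY) _ uK).
Qed.

Lemma comps_partition Y : partition (compsr Y) Y.
Proof.
rewrite /partition; apply/and3P; split.
- rewrite /cover; apply/eqP/setP=> u; apply/bigcupP/idP => [[K KY uK]|uY].
    exact: (subsetP (comps_sub KY)).
  by exists (compr Y u); [apply/imsetP; exists u | apply: compr_self].
- by apply/trivIsetP => K K' KY K'Y; exact: (comps_disj KY K'Y).
- by apply/negP=> /comps_n0 [u]; rewrite inE.
Qed.

Lemma card_comps Y : #|Y| = \sum_(K in compsr Y) #|K|.
Proof. exact: card_partition (comps_partition Y). Qed.

Lemma odd_sum_card (T : finType) (P : {set T}) (F : T -> nat) :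
  odd (\sum_(i in P) F i) = odd #|[set i in P | odd (F i)]|.
Proof.
rewrite -sum1_card big_mkcond /=.
have -> : \sum_(i in [set i in P | odd (F i)]) 1 = \sum_(i in P) (odd (F i) : nat).
  rewrite big_mkcond /= [RHS]big_mkcond /=; apply: eq_bigr => i _.
  by rewrite inE; case: (i \in P); case: (odd (F i)).
rewrite [X in _ = odd X]big_mkcond /=.
apply: (big_ind2 (fun a b => odd a = odd b)) => //.
  by move=> x1 x2 y1 y2 h1 h2; rewrite !oddD h1 h2.
by move=> i _; case: (i \in P) => //; case: (boolP (odd (F i))) => h //=; apply/negbTE.
Qed.

Lemma odd_card_comps Y : odd #|Y| = odd (oddc Y).
Proof. by rewrite card_comps odd_sum_card. Qed.

Lemma compr_mono Y Y' v : Y' \subset Y -> compr Y' v \subset compr Y v.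
Proof.
move=> sub; apply/subsetP => w; rewrite !inE => /andP[wY' c].
rewrite (subsetP sub _ wY') /=; apply: connect_sub c => x y /andP[/andP[xY yY] rxy].
by apply: connect1; rewrite /adjr (subsetP sub _ xY) (subsetP sub _ yY).
Qed.

Lemma compr_restrict Y Y' v : Y' \subset Y -> v \in Y' -> compr Y v \subset Y' ->
  compr Y' v = compr Y v.
Proof.
move=> sub vY' csub; apply/eqP; rewrite eqEsubset compr_mono //=.
have subc : forall x y, connect (adjr Y') x y -> connect (adjr Y) x y.
  move=> x y; apply: connect_sub => x1 y1 /andP[/andP[xY yY] rxy].
  by apply: connect1; rewrite /adjr (subsetP sub _ xY) (subsetP sub _ yY).
apply/subsetP => w wc; rewrite inE (subsetP csub _ wc) /=.
have vY : v \in Y by apply: (subsetP sub).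
move: wc; rewrite inE => /andP[_ cw].
apply: (closure_connect (P := fun u => connect (adjr Y') v u) _ (connect0 _ v) cw).
move=> u u' cu /andP[/andP[uY u'Y] ruu'].
have cvu : connect (adjr Y) v u := subc _ _ cu.
have u'c : u' \in compr Y v.
  rewrite inE u'Y /=; apply: connect_trans cvu (connect1 _).
  by rewrite /adjr uY u'Y.
have uc : u \in compr Y v by rewrite inE uY cvu.
apply: connect_trans cu (connect1 _).
by rewrite /adjr (subsetP csub _ uc) (subsetP csub _ u'c).
Qed.

End Generic.

Section PM.
Variable V : finType.
Implicit Types (Y X A B : {set V}) (r : rel V).

Definition pm r X := exists m : V -> V, forall x, x \in X ->
  [/\ m x \in X, m x != x, m (m x) = x & r x (m x)].

Lemma pm0 r : pm r set0.
Proof. by exists id => x; rewrite inE. Qed.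

Lemma pm_union r A B : [disjoint A & B] -> pm r A -> pm r B -> pm r (A :|: B).
Proof.
move=> dAB [mA hA] [mB hB].
exists (fun x => if x \in A then mA x else mB x) => x; rewrite inE => /orP[xA|xB].
  have [h1 h2 h3 h4] := hA x xA.
  by rewrite xA h1 h3 inE h1.
have xA : x \notin A by rewrite (disjointFl dAB xB).
have [h1 h2 h3 h4] := hB x xB.
have h1A : mB x \notin A by rewrite (disjointFl dAB h1).
by rewrite (negbTE xA) (negbTE h1A) h3 inE h1 orbT.
Qed.

Lemma pm_bigcup r (I : finType) (P : {set I}) (F : I -> {set V}) :
  (forall i j, i \in P -> j \in P -> i != j -> [disjoint F i & F j]) ->
  (forall i, i \in P -> pm r (F i)) -> pm r (\bigcup_(i in P) F i).
Proof.
move: {2}#|P| (leqnn #|P|) => n; elim: n P => [|n IH] P leP disj pmF.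
  move: leP; rewrite leqn0 cards_eq0 => /eqP ->; rewrite big_set0; exact: pm0.
case: (set_0Vmem P) => [->|[i iP]]; first by rewrite big_set0; exact: pm0.
rewrite (bigD1 i iP) /=.
have -> : \bigcup_(j | (j \in P) && (j != i)) F j = \bigcup_(j in P :\ i) F j.
  by apply: eq_bigl => j; rewrite !inE andbC.
apply: pm_union; last apply: IH.
- apply: bigcup_disjoint => j; rewrite !inE => /andP[ji jP].
  by apply: disj => //; rewrite eq_sym.
- exact: pmF.
- by move: leP; rewrite (cardsD1 i P) iP.
- by move=> j k; rewrite !inE => /andP[_ jP] /andP[_ kP]; apply: disj.
- by move=> j; rewrite !inE => /andP[_ jP]; apply: pmF.
Qed.

Lemma pm_pair r x y : x != y -> r x y -> r y x -> pm r [set x; y].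
Proof.
move=> nxy rxy ryx; have nyx : y != x by rewrite eq_sym.
exists (fun z => if z == x then y else x) => z.
rewrite !inE => /orP[]/eqP->.
  by rewrite !eqxx (negbTE nyx) ?eqxx ?orbT.
by rewrite !(negbTE nyx) ?eqxx.
Qed.

Lemma pm_clique r X : ~~ odd #|X| ->
  (forall x y, x \in X -> y \in X -> x != y -> r x y) -> pm r X.
Proof.
move: {2}#|X| (leqnn #|X|) => n; elim: n X => [|n IH] X le ev cl.
  by move: le; rewrite leqn0 cards_eq0 => /eqP ->; apply: pm0.
case: (set_0Vmem X) => [->|[x xX]]; first exact: pm0.
case: (set_0Vmem (X :\ x)) => [E|[y yX']].
  by move: ev; rewrite (cardsD1 x X) xX E cards0.
have yX : y \in X by case/setD1P: yX'.
have nyx : y != x by case/setD1P: yX'.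
have cX : #|X| = #|(X :\ x) :\ y|.+2 by rewrite (cardsD1 x X) xX (cardsD1 y (X :\ x)) yX'.
rewrite -(setD1K xX) -(setD1K yX') setUA.
apply: pm_union.
- rewrite -setI_eq0; apply/eqP/setP => z; rewrite !inE.
  by case: (z == x) (z == y); case=> //=; rewrite andbF.
- have nxy : x != y by rewrite eq_sym.
  by apply: pm_pair => //; apply: cl.
- apply: IH.
  + by move: le; rewrite cX ltnS => /ltnW.
  + by move: ev; rewrite cX /=; rewrite negbK.
  + by move=> u w; rewrite !inE => /andP[_ /andP[_ uX]] /andP[_ /andP[_ wX]]; apply: cl.
Qed.

Lemma connect_adjr_mono r r' Y x y : (forall u w, r u w -> r' u w) ->
  connect (adjr r Y) x y -> connect (adjr r' Y) x y.
Proof.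
move=> rr'; apply: connect_sub => u w /andP[uwY ruw].
by apply: connect1; rewrite /adjr uwY rr'.
Qed.

Lemma oddc_mono r r' Y : symmetric r -> symmetric r' -> (forall u w, r u w -> r' u w) ->
  oddc r' Y <= oddc r Y.
Proof.
move=> rsym r'sym rr'.
pose phi (L : {set V}) := [set w in Y | [exists u in L, connect (adjr r' Y) u w]].
apply: leq_trans (leq_imset_card phi _); apply: subset_leq_card.
apply/subsetP => K'; rewrite inE => /andP[K'c oddK'].
have K'Y := comps_sub K'c.
have : 0 < oddc r K' by move: oddK'; rewrite (odd_card_comps rsym); case: (oddc r K').
rewrite /oddc card_gt0 => /set0Pn [L]; rewrite inE => /andP[/imsetP[u uK' ->] oddL].
have cre : compr r K' u = compr r Y u.
  apply: compr_restrict => //; apply/subsetP => w; rewrite inE => /andP[wY cuw].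
  rewrite (comps_mem r'sym K'c uK') inE wY /=.
  exact: connect_adjr_mono cuw.
apply/imsetP; exists (compr r Y u).
  by rewrite inE -cre oddL andbT; apply/imsetP; exists u => //; apply: (subsetP K'Y).
apply/setP => w; rewrite inE; apply/idP/andP => [wK'|[wY /existsP[u' /andP[u'L cu'w]]]].
  split; first exact: (subsetP K'Y).
  apply/existsP; exists u; rewrite -cre compr_self //=.
  by move: wK'; rewrite (comps_mem r'sym K'c uK') inE => /andP[].
have u'K' : u' \in K' by move: u'L; rewrite -cre => /(subsetP (compr_sub _ _ _)).
by rewrite (comps_mem r'sym K'c u'K') inE wY.
Qed.

End PM.

Section Switch.
Variable V : finType.
Variable X : {set V}.
Variable r : rel V.
Hypothesis rsym : symmetric r.
Variables a b c d : V.
Hypotheses (aX : a \in X) (bX : b \in X) (cX : c \in X) (dX : d \in X).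
Hypotheses (nac : a != c) (nba : b != a) (nbc : b != c) (ndb : d != b)
  (nda : d != a) (ndc : d != c).
Hypotheses (rab : r a b) (rcb : r c b).
Variables n1 n2 : V -> V.
Hypothesis n1out : forall x, x \notin X -> n1 x = x.
Hypothesis n2out : forall x, x \notin X -> n2 x = x.
Hypothesis n1X : forall x, x \in X -> [/\ n1 x \in X, n1 x != x, n1 (n1 x) = x &
   r x (n1 x) || ((x == a) && (n1 x == c)) || ((x == c) && (n1 x == a))].
Hypothesis n2X : forall x, x \in X -> [/\ n2 x \in X, n2 x != x, n2 (n2 x) = x &
   r x (n2 x) || ((x == b) && (n2 x == d)) || ((x == d) && (n2 x == b))].
Hypothesis n1a : n1 a = c.
Hypothesis n2d : n2 d = b.

Lemma n1K : involutive n1.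
Proof. by move=> x; case: (boolP (x \in X)) => xX; [case: (n1X xX) | rewrite !n1out]. Qed.
Lemma n2K : involutive n2.
Proof. by move=> x; case: (boolP (x \in X)) => xX; [case: (n2X xX) | rewrite !n2out]. Qed.

Lemma n1c : n1 c = a. Proof. by rewrite -n1a n1K. Qed.
Lemma n2b : n2 b = d. Proof. by rewrite -n2d n2K. Qed.

Lemma n1in x : x \in X -> n1 x \in X. Proof. by case/n1X. Qed.
Lemma n2in x : x \in X -> n2 x \in X. Proof. by case/n2X. Qed.

Lemma n1r x : x \in X -> x != a -> x != c -> r x (n1 x).
Proof.
move=> xX nxa nxc; case: (n1X xX) => _ _ _.
by rewrite (negbTE nxa) (negbTE nxc) /= !orbF.
Qed.

Lemma n2r x : x \in X -> x != b -> x != d -> r x (n2 x).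
Proof.
move=> xX nxb nxd; case: (n2X xX) => _ _ _.
by rewrite (negbTE nxb) (negbTE nxd) /= !orbF.
Qed.

Definition g x := n2 (n1 x).
Definition h x := n1 (n2 x).
Lemma ghK : cancel h g. Proof. by move=> x; rewrite /g /h n1K n2K. Qed.
Lemma hgK : cancel g h. Proof. by move=> x; rewrite /g /h n2K n1K. Qed.
Lemma g_inj : injective g. Proof. exact: can_inj hgK. Qed.

Definition y i := iter i g d.

Lemma yX i : y i \in X.
Proof. by elim: i => //= i IH; rewrite /g n2in // n1in. Qed.

Lemma n2yS i : n2 (y i.+1) = n1 (y i).
Proof. by rewrite /y iterS /g n2K. Qed.

Lemma n1y_iter s x : n1 (iter s g x) = iter s h (n1 x).
Proof. by elim: s => //= s IH; rewrite -IH. Qed.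

Lemma iter_ghK s z : iter s g (iter s h z) = z.
Proof. by elim: s => // s IH; rewrite iterSr iterS ghK. Qed.

Lemma iter_hgK s z : iter s h (iter s g z) = z.
Proof. by elim: s => // s IH; rewrite iterSr iterS hgK. Qed.

Lemma no_refl s t : n1 (y s) != y t.
Proof.
apply/eqP => E.
have E1 : n1 d = iter (s + t) g d.
  by have := congr1 (iter s g) E; rewrite /y n1y_iter iter_ghK -iterD.
set N := s + t in E1.
have hN := odd_double_half N; rewrite -addnn in hN.
set q := N./2 in hN.
case: (odd N) hN => /= hN.
- have eN : N = q + q.+1 by rewrite -hN; lia.
  have : n2 (y q.+1) = y q.+1.
    by rewrite n2yS /y n1y_iter E1 eN iterD iter_hgK.
  by case: (n2X (yX q.+1)) => _ /eqP.
- have eN : N = q + q by rewrite -hN; lia.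
  have : n1 (y q) = y q.
    by rewrite /y n1y_iter E1 eN iterD iter_hgK.
  by case: (n1X (yX q)) => _ /eqP.
Qed.

Definition inC (n : nat) x := [exists i : 'I_n, (x == y i) || (x == n1 (y i))].

Lemma inCP n x : reflect (exists2 i, i < n & x = y i \/ x = n1 (y i)) (inC n x).
Proof.
apply: (iffP existsP) => [[i /orP[/eqP|/eqP] ->]|[i lt [->|->]]].
- by exists i => //; left.
- by exists i => //; right.
- by exists (Ordinal lt); rewrite eqxx.
- by exists (Ordinal lt); rewrite eqxx orbT.
Qed.

Lemma inC_n1 n x : inC n x -> inC n (n1 x).
Proof.
move/inCP => [i lt [->|->]]; apply/inCP; exists i => //; [right | left] => //.
by rewrite n1K.
Qed.

Lemma switch : pm r X.
Proof.
pose k := order g d.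
have yk : y k = d by rewrite /y iter_order //; apply: g_inj.
have k0 := order_gt0 g d.
have n1yk : n1 (y k.-1) = b.
  by rewrite -n2yS prednK // yk n2d.
have ex : exists i, [|| y i == a, y i == c | n1 (y i) == b].
  by exists k.-1; rewrite n1yk eqxx !orbT.
case: (ex_minnP ex) => j stopj minj.
have jk : j < k.
  have := minj k.-1; rewrite n1yk eqxx !orbT => /(_ isT) le.
  by apply: (leq_ltn_trans le); rewrite prednK.
have F2 : forall i, i < j -> [/\ y i != a, y i != c & n1 (y i) != b].
  move=> i lt; case: (boolP [|| y i == a, y i == c | n1 (y i) == b]) => st.
    by move: (minj i st); rewrite leqNgt lt.
  by move: st; rewrite !negb_or => /and3P[].
have dist : forall i i', i < k -> i' < k -> y i = y i' -> i = i'.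
  move=> i i' ik i'k E; have := orbit_uniq g d.
  rewrite /orbit => U; apply/eqP; rewrite -(nth_uniq d _ _ U) ?size_traject //.
  by rewrite !nth_traject // -/(y i) -/(y i') E.
have caseB : forall v, y j = v -> (v == a) || (v == c) -> pm r X.
  move=> v yv vac.
  have j0 : 0 < j.
    case: j yv {stopj minj jk F2} => // yv.
    by move: vac; rewrite -yv /y /= (negbTE nda) (negbTE ndc).
  pose C1 := inC j.
  have C1ac : forall x, C1 x -> x != a /\ x != c.
    move=> x /inCP [i lt [->|->]]; first by case: (F2 i lt).
    have [h1 h2 _] := F2 i lt; split; apply/eqP => E.
      by move: h2; rewrite -(n1K (y i)) E n1a eqxx.
    by move: h1; rewrite -(n1K (y i)) E n1c eqxx.
  have vC1 : ~~ C1 v.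
    apply/negP => /inCP [i lt [E|E]].
      have := dist i j (ltn_trans lt jk) jk; rewrite -E yv => /(_ erefl) eij.
      by move: lt; rewrite eij ltnn.
    have [h1 h2 _] := F2 i lt.
    by case/orP: vac => /eqP vE; move: E; rewrite vE => /(congr1 n1);
      rewrite n1K ?n1a ?n1c => E; [move: h2 | move: h1]; rewrite -E eqxx.
  have bC1 : ~~ C1 b.
    apply/negP => /inCP [i lt [E|E]].
      by move: (no_refl k.-1 i); rewrite n1yk E eqxx.
    by have [_ _ /eqP] := F2 i lt; rewrite E.
  have nvb : v != b.
    by case/orP: vac => /eqP ->; rewrite eq_sym.
  have C1d : C1 d by apply/inCP; exists 0 => //; left.
  have Cl2 : forall x, [|| C1 x, x == v | x == b] -> [|| C1 (n2 x), n2 x == v | n2 x == b].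
    move=> x /or3P [/inCP [i lt [->|->]]|/eqP->|/eqP->].
    + case: i lt => [|i] lt; first by rewrite n2d eqxx !orbT.
      by rewrite n2yS; apply/orP; left; apply/inCP; exists i; [apply: ltnW | right].
    + case: (ltngtP i.+1 j) => [lij|lji|eij].
      * by apply/orP; left; apply/inCP; exists i.+1 => //; left; rewrite /y iterS.
      * by move: lt; rewrite ltnNge -ltnS lji.
      * by rewrite -/(g (y i)) -iterS -/(y i.+1) eij yv eqxx orbT.
    + have ej : y j = y j.-1.+1 by rewrite prednK.
      rewrite -yv ej n2yS; apply/orP; left; apply/inCP; exists j.-1; last by right.
      by rewrite ltn_predL.
    + by rewrite n2b C1d.
  exists (fun x => if C1 x then n1 x else if x == v then b else if x == b then v else n2 x).
  move=> x xX.
  case: (boolP (C1 x)) => Cx.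
    have [h1 h2 h3 _] := n1X xX.
    have [nxa nxc] := C1ac x Cx.
    have Cn1 : C1 (n1 x) := inC_n1 Cx.
    by rewrite Cn1 h3; split => //; apply: n1r.
  case: (boolP (x == v)) => [/eqP ->|nxv].
    rewrite (negbTE bC1) (eq_sym b v) (negbTE nvb) eqxx; split => //.
    by case/orP: vac => /eqP ->.
  case: (boolP (x == b)) => [/eqP ->|nxb].
    rewrite (negbTE vC1) eqxx; split => //; try by rewrite -yv yX.
    by rewrite rsym; case/orP: vac => /eqP ->.
  have [h1 h2 h3 _] := n2X xX.
  have nC : ~~ [|| C1 (n2 x), n2 x == v | n2 x == b].
    apply/negP => /Cl2; rewrite h3 (negbTE Cx) (negbTE nxv) (negbTE nxb).
    done.
  move: nC; rewrite !negb_or => /and3P[nC1 nv nb].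
  rewrite (negbTE nC1) (negbTE nv) (negbTE nb) h3 ?(negbTE Cx) ?(negbTE nxv) ?(negbTE nxb).
  split => //; apply: n2r => //.
  by apply: contraNneq Cx => ->.
case/or3P: stopj => [/eqP ya|/eqP yc|/eqP yb]; last first.
-
  pose C := inC j.+1.
  have Cn2 : forall x, C x -> C (n2 x).
    move=> x /inCP [i lt [->|->]]; apply/inCP.
    + case: i lt => [|i] lt; first by exists j => //; right; rewrite n2d yb.
      by exists i; [apply: ltnW | right; rewrite n2yS].
    + case: (ltngtP i j) => [lij|lji|eij].
      * by exists i.+1 => //; left; rewrite /y iterS.
      * by move: lt; rewrite ltnS leqNgt lji.
      * by exists 0 => //; left; rewrite eij yb n2b.
  have Cac : forall x, C x -> x != a /\ x != c.
    have yac : forall i, i < j.+1 -> y i != a /\ y i != c.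
      move=> i; rewrite ltnS leq_eqVlt => /orP[/eqP ->|lt]; last by case: (F2 i lt).
      split; apply/eqP => E; move: yb; rewrite E ?n1a ?n1c => E2.
        by move: nbc; rewrite E2 eqxx.
      by move: nba; rewrite E2 eqxx.
    move=> x /inCP [i lt [->|->]]; first exact: yac.
    have [h1 h2] := yac i lt; split; apply/eqP => E.
      by move: h2; rewrite -(n1K (y i)) E n1a eqxx.
    by move: h1; rewrite -(n1K (y i)) E n1c eqxx.
  have Cd : C d by apply/inCP; exists 0 => //; left.
  have Cb : C b by apply/inCP; exists j => //; right.
  exists (fun x => if C x then n1 x else n2 x) => x xX.
  case: (boolP (C x)) => Cx.
  + have [h1 h2 h3 _] := n1X xX.
    have [nxa nxc] := Cac x Cx.
    have Cn1 : C (n1 x) := inC_n1 Cx.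
    by rewrite Cn1 h3; split => //; apply: n1r.
  + have [h1 h2 h3 _] := n2X xX.
    have nC : ~~ C (n2 x) by apply: contra Cx => /Cn2; rewrite h3.
    rewrite (negbTE nC) h3; split => //; apply: n2r => //.
      by apply: contraNneq Cx => ->.
    by apply: contraNneq Cx => ->.
- by apply: (caseB (y j) erefl); match goal with H : y j = _ |- _ => rewrite H end; rewrite eqxx ?orbT.
- by apply: (caseB (y j) erefl); match goal with H : y j = _ |- _ => rewrite H end; rewrite eqxx ?orbT.
Qed.

End Switch.


Section Tutte.
Variable V : finType.
Variable X : {set V}.
Implicit Types (r : rel V) (S : {set V}).

Lemma case1 r S : symmetric r -> S \subset X ->
  (forall s w, s \in S -> w \in X -> w != s -> r s w) ->
  (forall a b c, a \in X :\: S -> b \in X :\: S -> c \in X :\: S ->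
     r a b -> r b c -> a != c -> r a c) ->
  oddc r (X :\: S) <= #|S| -> ~~ odd #|X| -> pm r X.
Proof.
move=> rs SX Su tri oc ev.
case: (set_0Vmem X) => [->|[x0 _]]; first exact: pm0.
set Y := X :\: S.
have YX : Y \subset X by apply: subsetDl.
have YS : forall x, x \in Y -> x \notin S by move=> x; rewrite inE => /andP[].
set O := [set K in compsr r Y | odd #|K|].
have cliqueK : forall K, K \in compsr r Y -> forall x y, x \in K -> y \in K -> x != y -> r x y.
  move=> K KY x y xK yK nxy.
  have KsY := comps_sub KY.
  have xY := subsetP KsY x xK.
  have cxy : connect (adjr r Y) x y.
    by move: yK; rewrite (comps_mem rs KY xK) inE => /andP[].
  have : (y == x) || r x y.
    apply: (closure_connect (P := fun z => (z == x) || r x z) _ _ cxy); last by rewrite eqxx.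
    move=> u w /orP[/eqP->|rxu] /andP[/andP[uY wY] ruw]; first by rewrite ruw orbT.
    case: (eqVneq w x) => [->|nwx]; first by rewrite ?eqxx.
    by rewrite (tri x u w) ?orbT // eq_sym.
  by case/orP => // /eqP E; move: nxy; rewrite E eqxx.
pose f K := nth x0 (enum S) (index K (enum O)).
have fS : forall K, K \in O -> f K \in S.
  move=> K KO; rewrite -mem_enum; apply: mem_nth; rewrite -cardE.
  by apply: (leq_trans _ oc); rewrite /oddc -/O cardE index_mem mem_enum.
have finj : {in O &, injective f}.
  move=> K K' KO K'O E.
  have iK : index K (enum O) < #|S|.
    by apply: (leq_trans _ oc); rewrite /oddc -/O cardE index_mem mem_enum.
  have iK' : index K' (enum O) < #|S|.
    by apply: (leq_trans _ oc); rewrite /oddc -/O cardE index_mem mem_enum.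
  move: E; rewrite /f => /eqP.
  rewrite (@nth_uniq _ x0 (enum S) (index K (enum O)) (index K' (enum O))) ?enum_uniq -?cardE //.
  move=> /eqP E.
  have e1 := @nth_index _ K K (enum O); have e2 := @nth_index _ K K' (enum O).
  rewrite !mem_enum in e1 e2.
  by rewrite -(e1 KO) -(e2 K'O) E.
pose B (K : {set V}) := if odd #|K| then f K |: K else K.
set R := S :\: (f @: O).
have BX : forall K, K \in compsr r Y -> B K \subset X.
  move=> K KY; apply/subsetP => x; rewrite /B.
  have KX := subset_trans (comps_sub KY) YX.
  case: ifP => oK; last exact: (subsetP KX).
  case/setU1P => [->|xK]; last exact: (subsetP KX).
  by apply: (subsetP SX); apply: fS; rewrite inE KY.
have XE : X = (\bigcup_(K in compsr r Y) B K) :|: R.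
  apply/setP => x; apply/idP/idP => [xX|].
    case: (boolP (x \in S)) => xS.
      case: (boolP (x \in f @: O)) => xf.
        case/imsetP: xf => K KO ->; apply/setUP; left; apply/bigcupP; exists K.
          by move: KO; rewrite inE => /andP[].
        by move: KO; rewrite inE /B => /andP[_ ->]; rewrite setU11.
      by apply/setUP; right; rewrite inE xS xf.
    have xY : x \in Y by rewrite inE xS xX.
    apply/setUP; left; apply/bigcupP; exists (compr r Y x); first by apply/imsetP; exists x.
    by rewrite /B; case: ifP => _; [apply: setU1r|]; exact: compr_self.
  case/setUP => [/bigcupP[K KY xB]|]; first exact: (subsetP (BX K KY)).
  by rewrite inE => /andP[_ /(subsetP SX)].
rewrite XE; apply: pm_union.
- rewrite disjoint_sym; apply: bigcup_disjoint => K KY.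
  rewrite -setI_eq0; apply/eqP/setP => x; rewrite !inE; apply/negP => /andP[/andP[nxf xS]].
  rewrite /B; case: ifP => oK; first case/setU1P.
  + by move=> E; move: nxf; rewrite E imset_f // inE KY.
  + by move/(subsetP (comps_sub KY))/YS; rewrite xS.
  + by move/(subsetP (comps_sub KY))/YS; rewrite xS.
- apply: pm_bigcup => [K K' KY K'Y nKK'|K KY].
    rewrite -setI_eq0; apply/eqP/setP => x; rewrite !inE; apply/negP => /andP[].
    have xK_K' : x \in K -> x \in K' -> False.
      move=> xK xK'; move: nKK'; rewrite (comps_inter rs KY K'Y xK xK') eqxx //.
    have fKY : forall L, L \in compsr r Y -> odd #|L| -> f L \in S.
      by move=> L LY oL; apply: fS; rewrite inE LY oL.
    rewrite /B; case: ifP => oK; case: ifP => oK'; rewrite ?inE.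
    + case/orP => [/eqP->|xK] /orP[/eqP E|xK'].
      * by move: nKK'; rewrite (finj K K') ?eqxx // inE ?KY ?K'Y ?oK ?oK'.
      * by move/(subsetP (comps_sub K'Y))/YS: xK'; rewrite fKY.
      * by move/(subsetP (comps_sub KY))/YS: xK; rewrite E fKY.
      * exact: xK_K'.
    + case/orP => [/eqP->|xK] xK'; last exact: xK_K'.
      by move/(subsetP (comps_sub K'Y))/YS: xK'; rewrite fKY.
    + move=> xK /orP[/eqP E|xK']; last exact: xK_K'.
      by move/(subsetP (comps_sub KY))/YS: xK; rewrite E fKY.
    + exact: xK_K'.
  rewrite /B; case: ifP => oK.
    have fK : f K \in S by apply: fS; rewrite inE KY oK.
    have fnK : f K \notin K.
      by apply/negP => /(subsetP (comps_sub KY))/YS; rewrite fK.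
    apply: pm_clique; first by rewrite cardsU1 fnK /= oK.
    have KX := subset_trans (comps_sub KY) YX.
    move=> x y /setU1P[->|xK] /setU1P[->|yK] nxy.
    * by rewrite eqxx in nxy.
    * by apply: Su => //; [exact: (subsetP KX) | rewrite eq_sym].
    * by rewrite rs; apply: Su => //; exact: (subsetP KX).
    * exact: cliqueK KY x y xK yK nxy.
  apply: pm_clique; first by rewrite oK.
  exact: cliqueK.
- apply: pm_clique.
    have fOS : f @: O \subset S by apply/subsetP => x /imsetP[K KO ->]; apply: fS.
    rewrite cardsD (setIidPr fOS) (card_in_imset finj).
    have OS : #|O| <= #|S| := oc.
    rewrite oddB //.
    have : odd #|Y| = odd #|O| := odd_card_comps rs Y.
    rewrite cardsD (setIidPr SX) oddB ?subset_leq_card // => <-.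
    by rewrite addbC -addbA addbb addbF.
  move=> x w; rewrite !inE => /andP[_ xS] /andP[_ wS] nxw.
  by apply: Su => //; [exact: (subsetP SX) | rewrite eq_sym].
Qed.

Definition addE r a c : rel V :=
  fun x y => r x y || ((x == a) && (y == c)) || ((x == c) && (y == a)).

Lemma addE_sym r a c : symmetric r -> symmetric (addE r a c).
Proof.
move=> rs x y; rewrite /addE rs.
by case: (x == a); case: (x == c); case: (y == a); case: (y == c); rewrite /= ?orbT ?orbF.
Qed.

Definition nonedges r :=
  #|[set p : V * V | [&& p.1 \in X, p.2 \in X, p.1 != p.2 & ~~ r p.1 p.2]]|.

Lemma nonedges_lt r a c : a \in X -> c \in X -> a != c -> ~~ r a c ->
  nonedges (addE r a c) < nonedges r.
Proof.
move=> aX cX nac nrac; apply: proper_card; rewrite properE; apply/andP; split.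
  apply/subsetP => p; rewrite !inE => /and4P[-> -> -> nr] /=.
  by apply: contra nr; rewrite /addE => ->.
apply/subsetPn; exists (a, c); rewrite !inE /= ?aX ?cX ?nac ?nrac //.
by rewrite /addE !eqxx orbT.
Qed.

Definition tutte_cond r := forall S, S \subset X -> oddc r (X :\: S) <= #|S|.

Lemma addE_pm r a c : pm (addE r a c) X -> ~ pm r X -> a \in X ->
  exists n : V -> V, [/\ forall x, x \notin X -> n x = x,
    forall x, x \in X -> [/\ n x \in X, n x != x, n (n x) = x &
      r x (n x) || ((x == a) && (n x == c)) || ((x == c) && (n x == a))]
    & n a = c].
Proof.
move=> [m hm] npm aX.
have mac : m a = c.
  apply/eqP; apply/negPn/negP => nmac; apply: npm; exists m => x xX.
  have [h1 h2 h3 h4] := hm x xX; split => //.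
  move: h4; rewrite /addE; case: (boolP (x == a)) => [/eqP xa|nxa].
    subst x; rewrite (negbTE nmac) /= !orbF; case/orP => // /andP[_ /eqP E].
    by move: h2; rewrite E eqxx.
  case: (boolP (x == c)) => [/eqP xc|nxc]; last by rewrite /= !orbF.
  subst x; rewrite andFb andTb orbF; case/orP => // /eqP E.
  by move: nmac; rewrite -E h3 eqxx.
exists (fun x => if x \in X then m x else x); split.
- by move=> x /negbTE ->.
- move=> x xX; have [h1 h2 h3 h4] := hm x xX.
  by rewrite xX h1 h3; split.
- by rewrite aX.
Qed.

Lemma tutte_step r : symmetric r -> tutte_cond r ->
  (forall a c, a \in X -> c \in X -> a != c -> ~~ r a c -> pm (addE r a c) X) ->
  pm r X.
Proof.
move=> rs tc maxi.
case: (classic (pm r X)) => // npm; exfalso.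
pose S := [set v in X | [forall w in X, (w != v) ==> r v w]].
have SX : S \subset X by apply/subsetP => v; rewrite inE => /andP[].
have Su : forall s w, s \in S -> w \in X -> w != s -> r s w.
  move=> s w; rewrite inE => /andP[_ /forall_inP H] wX nws.
  by move: (H w wX); rewrite nws.
have ev : ~~ odd #|X|.
  have := tc set0 (sub0set X); rewrite setD0 cards0 leqn0 => /eqP o0.
  by rewrite (odd_card_comps rs) o0.
case: (classic (exists a b c, [/\ a \in X :\: S, b \in X :\: S & c \in X :\: S] /\
   [/\ r a b, r b c, a != c & ~~ r a c])) => [[a [b [c [[aY bY cY] [rab rbc nac nrac]]]]]|H].
- have aX : a \in X by move: aY; rewrite inE => /andP[].
  have bX : b \in X by move: bY; rewrite inE => /andP[].
  have cX : c \in X by move: cY; rewrite inE => /andP[].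
  have : b \notin S by move: bY; rewrite inE => /andP[].
  rewrite inE bX /= negb_forall_in => /exists_inP [d dX].
  rewrite negb_imply => /andP[ndb nrbd].
  have nba : b != a by apply: contraNneq nrac => <-.
  have nbc : b != c by apply: contraNneq nrac => <-.
  have nda : d != a by apply: contraNneq nrbd => ->; rewrite rs.
  have ndc : d != c by apply: contraNneq nrbd => ->.
  have rcb : r c b by rewrite rs.
  have [n1 [n1o n1X n1a]] := addE_pm (maxi a c aX cX nac nrac) npm aX.
  have nbd : b != d by rewrite eq_sym.
  have [n2 [n2o n2X n2b]] := addE_pm (maxi b d bX dX nbd nrbd) npm bX.
  have n2d : n2 d = b by case: (n2X b bX) => _ _ <- _; rewrite n2b.
  have n2X' : forall x, x \in X -> [/\ n2 x \in X, n2 x != x, n2 (n2 x) = x &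
      r x (n2 x) || ((x == b) && (n2 x == d)) || ((x == d) && (n2 x == b))] := n2X.
  apply: npm; exact: (switch rs aX bX cX dX nac nba nbc ndb nda ndc rab rcb n1o n2o n1X n2X' n1a n2d).
- apply: npm; apply: (case1 rs SX Su) => //; last by apply: tc.
  move=> a b c aY bY cY rab rbc nac; apply/negPn/negP => nrac.
  by apply: H; exists a, b, c.
Qed.

Theorem tutte r : symmetric r -> tutte_cond r -> pm r X.
Proof.
move: {2}(nonedges r) (leqnn (nonedges r)) => n; elim: n r => [|n IH] r le rs tc.
  apply: tutte_step => // a c aX cX nac nrac.
  move: (nonedges_lt aX cX nac nrac); move: le; rewrite leqn0 => /eqP ->.
  by rewrite ltn0.
apply: tutte_step => // a c aX cX nac nrac; apply: IH.
- by rewrite -ltnS; apply: leq_trans le; apply: nonedges_lt.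
- exact: addE_sym.
- move=> S SX; apply: leq_trans (tc S SX); apply: oddc_mono => //; first exact: addE_sym.
  by move=> u w ruw; rewrite /addE ruw.
Qed.

End Tutte.


Section Cubic.
Variables (V E : finType) (src tgt : E -> V).
Implicit Types (X Y S A L K : {set V}).

Definition r0 : rel V := fun x y => [exists f, links src tgt f x y].

Lemma links_sym f x y : links src tgt f x y = links src tgt f y x.
Proof. by rewrite /links orbC. Qed.

Lemma r0_sym : symmetric r0.
Proof.
move=> x y; apply/existsP/existsP => [[f h]|[f h]]; exists f; by rewrite links_sym.
Qed.

Lemma compsE Y : components src tgt Y = compsr r0 Y.
Proof. by []. Qed.

Lemma pm_hpm X : pm r0 X -> has_perfect_matching src tgt X.
Proof.
move=> [m hm].
pose pe x y := [pick f | links src tgt f x y].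
have pe_sym : forall x y, pe x y = pe y x.
  by move=> x y; apply: eq_pick => f; rewrite links_sym.
have peS : forall x, x \in X -> exists f, pe x (m x) = Some f /\ links src tgt f x (m x).
  move=> x xX; have [_ _ _ rx] := hm x xX; rewrite /pe.
  case: pickP => [f lf|none]; first by exists f.
  by move: rx => /existsP [f lf]; rewrite none in lf.
exists [set e | [exists x in X, pe x (m x) == Some e]]; split.
- move=> e; rewrite inE => /exists_inP [x xX /eqP pex].
  have [f [pf lf]] := peS x xX; move: pex; rewrite pf => [[<-]].
  have [h1 h2 _ _] := hm x xX.
  by case/orP: lf => /andP[/eqP -> /eqP ->]; split => //; rewrite eq_sym.
- move=> v vX; apply/eqP/cards1P.
  have [f [pf lf]] := peS v vX; exists f; apply/setP => e; rewrite !inE.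
  apply/andP/eqP => [[/exists_inP [x xX /eqP pex] ev]|->].
    have [g [pg lg]] := peS x xX; move: pex; rewrite pg => [[eg]]; subst g.
    have [h1 h2 h3 _] := hm x xX.
    have : v = x \/ v = m x.
      by case/orP: lg => /andP[/eqP s /eqP t]; case/orP: ev => /eqP; rewrite ?s ?t; auto.
    case=> vE; subst v.
      by move: pf; rewrite pg => [[]].
    by move: pf; rewrite h3 pe_sym pg => [[]].
  split; first by apply/exists_inP; exists v => //; rewrite pf.
  by case/orP: lf => /andP[/eqP -> /eqP ->]; rewrite eqxx ?orbT.
Qed.

Lemma card_bigcup_disj (I T : finType) (P : {set I}) (F : I -> {set T}) :
  (forall i j, i \in P -> j \in P -> i != j -> [disjoint F i & F j]) ->
  #|\bigcup_(i in P) F i| = \sum_(i in P) #|F i|.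
Proof.
move: {2}#|P| (leqnn #|P|) => n; elim: n P => [|n IH] P leP disj.
  by move: leP; rewrite leqn0 cards_eq0 => /eqP ->; rewrite !big_set0 cards0.
case: (set_0Vmem P) => [->|[i iP]]; first by rewrite !big_set0 cards0.
rewrite (bigD1 i iP) [in RHS](bigD1 i iP) /=.
have -> : \bigcup_(j | (j \in P) && (j != i)) F j = \bigcup_(j in P :\ i) F j.
  by apply: eq_bigl => j; rewrite !inE andbC.
have -> : \sum_(j | (j \in P) && (j != i)) #|F j| = \sum_(j in P :\ i) #|F j|.
  by apply: eq_bigl => j; rewrite !inE andbC.
rewrite cardsU.
have -> : F i :&: \bigcup_(j in P :\ i) F j = set0.
  apply/eqP; rewrite setI_eq0; apply: bigcup_disjoint => j; rewrite !inE => /andP[ji jP].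
  by apply: disj => //; rewrite eq_sym.
rewrite cards0 subn0 IH //.
- by move: leP; rewrite (cardsD1 i P) iP.
- by move=> j k; rewrite !inE => /andP[_ jP] /andP[_ kP]; apply: disj.
Qed.

Lemma sum_mem (T : finType) (A : {set T}) : \sum_i (i \in A : nat) = #|A|.
Proof. by rewrite -sum1_card [RHS]big_mkcond /=; apply: eq_bigr => i _; case: (i \in A). Qed.

Lemma sum_eqv (Y : {set V}) u : \sum_(v in Y) (u == v) = (u \in Y).
Proof.
case: (boolP (u \in Y)) => uY.
  rewrite (bigD1 u uY) eqxx big1 // => v /andP[_ nvu].
  by rewrite eq_sym (negbTE nvu).
by rewrite big1 // => v vY; apply/eqP; rewrite eqb0; apply: contraNneq uY => ->.
Qed.

Hypothesis cub : cubic src tgt.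
Hypothesis bl : bridgeless src tgt.

Lemma deg_setT v : \sum_e ((src e == v) + (tgt e == v)) = 3.
Proof.
rewrite -(cub v) /deg_in; apply: eq_bigl => e; by rewrite !in_setT.
Qed.

Lemma sum_deg Y : 3 * #|Y| = \sum_e ((src e \in Y) + (tgt e \in Y)).
Proof.
rewrite mulnC -sum_nat_const.
rewrite (eq_bigr (fun v => \sum_e ((src e == v) + (tgt e == v)))); last by move=> v _; rewrite deg_setT.
rewrite exchange_big /=; apply: eq_bigr => e _.
by rewrite big_split /= !sum_eqv.
Qed.

Lemma cut_parity Y : odd #|cut src tgt Y| = odd #|Y|.
Proof.
have := congr1 odd (sum_deg Y); rewrite oddM /= => ->.
rewrite (eq_bigl (fun e => e \in [set: E])); last by move=> e; rewrite in_setT.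
rewrite odd_sum_card; congr odd; apply: eq_card => e; rewrite !inE.
by case: (src e \in Y); case: (tgt e \in Y).
Qed.

Lemma cut_bridge A e : cut src tgt A = [set e] -> False.
Proof.
move=> H.
have ecut : e \in cut src tgt A by rewrite H set11.
move: (bl e); rewrite /bridge negbK => c.
have cl : forall u w, (u \in A) == (src e \in A) -> adj_minus src tgt e u w ->
    (w \in A) == (src e \in A).
  move=> u w /eqP Pu /existsP [f /andP[nfe lf]]; rewrite -Pu.
  apply/negPn/negP => Hd.
  have : f \in cut src tgt A.
    rewrite inE; case/orP: lf => /andP[/eqP -> /eqP ->] //; by rewrite eq_sym.
  by rewrite H inE (negbTE nfe).
have := closure_connect (P := fun z => (z \in A) == (src e \in A)) cl (eqxx _) c.
by rewrite eq_sym; move: ecut; rewrite inE => /negbTE ->.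
Qed.

Lemma cut_ne1 A : #|cut src tgt A| != 1.
Proof. by apply/negP => /cards1P [e H]; exact: cut_bridge H. Qed.

Lemma cut_odd3 A : odd #|A| -> 3 <= #|cut src tgt A|.
Proof.
rewrite -cut_parity; have := cut_ne1 A.
by case: #|cut src tgt A| => [|[|[|n]]].
Qed.

Lemma cut_nonempty A (e : rel V) x y : (forall u w, e u w -> r0 u w) ->
  x \in A -> y \notin A -> connect e x y -> cut src tgt A != set0.
Proof.
move=> er xA nyA c; apply/negP => /eqP c0.
have cl : forall u w, u \in A -> e u w -> w \in A.
  move=> u w uA /er /existsP [f lf]; apply/negPn/negP => nwA.
  have : f \in cut src tgt A.
    by rewrite inE; case/orP: lf => /andP[/eqP -> /eqP ->]; rewrite uA ?(negbTE nwA).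
  by rewrite c0 inE.
have := closure_connect (P := fun z => z \in A) cl xA c.
by rewrite (negbTE nyA).
Qed.

Lemma cut_out Y K e : K \in compsr r0 Y -> e \in cut src tgt K ->
  (src e \in K /\ tgt e \notin Y) \/ (tgt e \in K /\ src e \notin Y).
Proof.
move=> KY; rewrite inE.
have cl : forall x y, x \in K -> links src tgt e x y -> y \in Y -> y \in K.
  move=> x y xK lxy yY; apply: (comp_closed r0_sym KY xK yY).
  by apply/existsP; exists e.
case: (boolP (src e \in K)) => sK; case: (boolP (tgt e \in K)) => tK //= _.
  left; split => //; apply: contra tK; apply: cl sK _.
  by rewrite /links !eqxx.
right; split => //; apply: contra sK; apply: cl tK _.
by rewrite /links !eqxx orbT.
Qed.

Lemma cut_disj Y K K' : K \in compsr r0 Y -> K' \in compsr r0 Y -> K != K' ->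
  [disjoint cut src tgt K & cut src tgt K'].
Proof.
move=> KY K'Y nKK'; rewrite -setI_eq0; apply/eqP/setP => e; rewrite !inE.
apply/negP => /andP[eK eK'].
have dKK' := comps_disj r0_sym KY K'Y nKK'.
have KsY := comps_sub KY; have K'sY := comps_sub K'Y.
have nin : forall x, x \in K -> x \in K' -> False.
  move=> x xK xK'; move: dKK'; rewrite -setI_eq0 => /eqP/setP/(_ x).
  by rewrite !inE xK xK'.
have ecK : e \in cut src tgt K by rewrite inE.
have ecK' : e \in cut src tgt K' by rewrite inE.
case: (cut_out KY ecK) => [[sK ntY]|[tK nsY]].
  case: (cut_out K'Y ecK') => [[sK' _]|[tK' _]]; first exact: nin sK sK'.
  by move: ntY; rewrite (subsetP K'sY _ tK').
case: (cut_out K'Y ecK') => [[sK' _]|[tK' _]]; last exact: nin tK tK'.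
by move: nsY; rewrite (subsetP K'sY _ sK').
Qed.

Definition Ev v := [set e | (src e == v) || (tgt e == v)].

Lemma card_Ev v : #|Ev v| <= 3.
Proof.
rewrite -(deg_setT v) -sum1_card big_mkcond /=.
apply: leq_sum => e _; rewrite inE.
by case: (src e == v); case: (tgt e == v).
Qed.

Lemma count_main X S : #|cut src tgt X| = 6 -> S \subset X ->
  #|S| + 2 <= oddc r0 (X :\: S) ->
  [/\ oddc r0 (X :\: S) = #|S| + 2,
      forall L, L \in compsr r0 (X :\: S) -> odd #|L| -> #|cut src tgt L| = 3,
      forall L, L \in compsr r0 (X :\: S) -> ~~ odd #|L| -> cut src tgt L = set0,
      independent src tgt S &
      forall v, v \in S -> deg_in src tgt X v = 3].
Proof.
move=> cX6 SX ho.
set Y := X :\: S; set C := compsr r0 Y.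
have YX : Y \subset X by apply: subsetDl.
pose T := [set e | (src e \in S) || (tgt e \in S)].
pose B := [set e | (src e \in S) && (tgt e \in S)].
have c1 : forall L, L \in C -> cut src tgt L \subset T :|: cut src tgt X.
  move=> L LC; apply/subsetP => e ecL; rewrite !inE.
  have LX := subset_trans (comps_sub LC) YX.
  case: (cut_out LC ecL) => [[sL ntY]|[tL nsY]].
    move: ntY; rewrite inE negb_and negbK (subsetP LX _ sL) /=.
    by case/orP => [->|/negbTE ->]; rewrite ?orbT.
  move: nsY; rewrite inE negb_and negbK (subsetP LX _ tL) /=.
  by case/orP => [->|/negbTE ->]; rewrite ?orbT.
pose O := [set L in C | odd #|L|].
pose Oe := [set L in C | ~~ odd #|L|].
have hA : \sum_(L in C) #|cut src tgt L| = \sum_(L in O) #|cut src tgt L| + \sum_(L in Oe) #|cut src tgt L|.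
  rewrite (bigID (fun L => odd #|L|)) /=; congr (_ + _); apply: eq_bigl => L; by rewrite !inE.
have h2 : \sum_(L in C) #|cut src tgt L| <= #|T :|: cut src tgt X|.
  rewrite -(@card_bigcup_disj _ _ C (fun L => cut src tgt L)); last first.
    by move=> L L' LC L'C; exact: (cut_disj LC L'C).
  by apply: subset_leq_card; apply/bigcupsP => L LC; apply: c1.
have h1 : 3 * #|O| <= \sum_(L in O) #|cut src tgt L|.
  rewrite mulnC -sum_nat_const; apply: leq_sum => L; rewrite inE => /andP[_ oL].
  exact: cut_odd3.
have h3 : #|T :|: cut src tgt X| <= #|T| + 6 by rewrite -cX6; apply: (leq_card_setU _ _).1.
have h4 : 3 * #|S| = #|T| + #|B|.
  rewrite sum_deg -!sum_mem -big_split /=; apply: eq_bigr => e _.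
  by rewrite !inE; case: (src e \in S); case: (tgt e \in S).
have ho' : #|S| + 2 <= #|O| := ho.
have hU := leq_card_setU T (cut src tgt X).
move: hA h1 h2 h3 h4 ho' hU.
set A := \sum_(L in C) _; set A1 := \sum_(L in O) _; set A2 := \sum_(L in Oe) _.
set U := #|T :|: _|; set t := #|T|; set b := #|B|; set o := #|O|; set s := #|S|.
move=> hA h1 h2 h3 h4 ho' hU.
have eo : o = s + 2 by lia.
have eA1 : A1 = 3 * o by lia.
have eA2 : A2 = 0 by lia.
have eb : b = 0 by lia.
have eU : U = t + #|cut src tgt X| by rewrite cX6; lia.
split.
- exact: eo.
- move=> L LC oL.
  have LO : L \in O by rewrite inE LC oL.
  have : \sum_(L in O) (#|cut src tgt L| - 3) == 0.
    have : A1 = \sum_(L in O) (#|cut src tgt L| - 3) + 3 * o.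
      rewrite mulnC -sum_nat_const -big_split /=; apply: eq_bigr => K.
      by rewrite inE => /andP[_ oK]; rewrite subnK // cut_odd3.
    by rewrite eA1 => Eq; apply/eqP; lia.
  rewrite sum_nat_eq0 => /forall_inP /(_ L LO).
  by have := cut_odd3 oL; lia.
- move=> L LC eL; apply/eqP; rewrite -cards_eq0.
  have LOe : L \in Oe by rewrite inE LC eL.
  by move: eA2; rewrite /A2 => /eqP; rewrite sum_nat_eq0 => /forall_inP /(_ L LOe).
- move=> e; apply/negP => Be.
  by move: eb; rewrite /b => /eqP; rewrite cards_eq0 => /eqP/setP/(_ e); rewrite inE Be inE.
- move=> v vS.
  have dTX : [disjoint T & cut src tgt X] by rewrite -hU.2 eU.
  rewrite /deg_in -(deg_setT v) big_mkcond /=; apply: eq_bigr => e _.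
  case: ifP => // nX.
  have vX := subsetP SX _ vS.
  case: (boolP (src e == v)) => [/eqP sv|nsv]; case: (boolP (tgt e == v)) => [/eqP tv|ntv] //.
  + by move: nX; rewrite sv tv vX.
  + have eT : e \in T by rewrite inE sv vS.
    have : e \notin cut src tgt X by rewrite (disjointFr dTX eT).
    by rewrite inE sv vX; move: nX; rewrite sv vX /= => ->.
  + have eT : e \in T by rewrite inE tv vS orbT.
    have : e \notin cut src tgt X by rewrite (disjointFr dTX eT).
    by rewrite inE tv vX; move: nX; rewrite tv vX andbT => ->.
Qed.

Lemma even_fix X S L : S \subset X -> L \in compsr r0 (X :\: S) -> ~~ odd #|L| ->
  cut src tgt L = set0 ->
  exists S', [/\ S' \subset X, #|S'| = #|S|.+1 & (oddc r0 (X :\: S)).+1 <= oddc r0 (X :\: S')].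
Proof.
move=> SX LC eL cL0.
set Y := X :\: S.
have LY := comps_sub LC.
have [v vL] := comps_n0 LC.
have vY := subsetP LY v vL.
have vS : v \notin S by move: vY; rewrite inE => /andP[].
have vX : v \in X by move: vY; rewrite inE => /andP[].
case: (set_0Vmem (L :\ v)) => [E0|[w wL']].
  by move: eL; rewrite (cardsD1 v L) vL E0 cards0.
have wL : w \in L by case/setD1P: wL'.
have nwv : w != v by case/setD1P: wL'.
set S' := v |: S.
set Y' := X :\: S'.
have Y'E : Y' = Y :\ v.
  apply/setP => x; rewrite !inE; by case: (x == v); case: (x \in S).
have Y'Y : Y' \subset Y by rewrite Y'E subD1set.
have vY' : v \notin Y' by rewrite Y'E !inE eqxx.
have LYv : forall x, x \in L -> x != v -> x \in Y'.
  by move=> x xL nxv; rewrite Y'E in_setD1 nxv (subsetP LY _ xL).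
exists S'; split.
- by rewrite /S' subUset sub1set vX SX.
- by rewrite cardsU1 vS.
have Lw : L = compr r0 Y w := comps_mem r0_sym LC wL.
have inL : forall K, K \in compsr r0 Y' -> K :&: L != set0 -> K \subset L :\ v.
  move=> K KC /set0Pn [x]; rewrite inE => /andP[xK xL].
  apply/subsetP => z zK; rewrite !inE.
  have zY' := subsetP (comps_sub KC) z zK.
  have -> : z != v by apply: contraNneq vY' => <-.
  rewrite (comps_mem r0_sym LC xL) /=.
  apply: (subsetP (compr_mono _ _ Y'Y)).
  by rewrite -(comps_mem r0_sym KC xK).
have cutK : forall K, K \in compsr r0 Y' -> K \subset L :\ v ->
    cut src tgt K \subset Ev v /\ 2 <= #|cut src tgt K|.
  move=> K KC KL; split.
    apply/subsetP => e ecK; rewrite inE.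
    have KL' : forall x, x \in K -> x \in L by move=> x /(subsetP KL); case/setD1P.
    have notcut : forall x y, x \in L -> y \notin L -> links src tgt e x y -> False.
      move=> x y xL nyL lxy.
      have : e \in cut src tgt L.
        by rewrite inE; case/orP: lxy => /andP[/eqP -> /eqP ->]; rewrite xL (negbTE nyL).
      by rewrite cL0 inE.
    case: (cut_out KC ecK) => [[sK ntY']|[tK nsY']].
      case: (eqVneq (tgt e) v) => [tv|ntv]; first by rewrite orbT.
      exfalso; apply: (notcut (src e) (tgt e) (KL' _ sK)).
        by apply/negP => tL; move/negP: ntY'; apply; apply: LYv.
      by rewrite /links !eqxx.
    case: (eqVneq (src e) v) => [sv|nsv]; first by [].
    exfalso; apply: (notcut (tgt e) (src e) (KL' _ tK)).
      by apply/negP => sL; move/negP: nsY'; apply; apply: LYv.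
    by rewrite /links !eqxx orbT.
  have [x xK] := comps_n0 KC.
  have xL : x \in L by have := subsetP KL x xK; case/setD1P.
  have cxv : connect (adjr r0 Y) x v.
    by move: vL; rewrite (comps_mem r0_sym LC xL) inE => /andP[].
  have nvK : v \notin K by apply: contra vY' => /(subsetP (comps_sub KC)).
  have := cut_nonempty (e := adjr r0 Y) _ xK nvK cxv.
  move=> /(_ (fun u w' h => (andP h).2)); rewrite -cards_eq0 => n0.
  have := cut_ne1 K; move: n0.
  by case: #|cut src tgt K| => [|[|n]].
set Kw := compr r0 Y' w.
have wY' : w \in Y' by apply: LYv.
have KwC : Kw \in compsr r0 Y' by apply/imsetP; exists w.
have wKw : w \in Kw by apply: compr_self.
have KwL : Kw \subset L :\ v.
  apply: inL => //; apply/set0Pn; exists w; by rewrite inE wKw wL.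
have KwE : Kw = L :\ v.
  apply/eqP; rewrite eqEsubset KwL /=; apply/subsetP => w' w'L'.
  apply/negPn/negP => nw'K.
  have w'Y' : w' \in Y'.
    by case/setD1P: w'L' => nw'v w'L; apply: LYv.
  set K2 := compr r0 Y' w'.
  have K2C : K2 \in compsr r0 Y' by apply/imsetP; exists w'.
  have w'K2 : w' \in K2 by apply: compr_self.
  have K2L : K2 \subset L :\ v.
    apply: inL => //; apply/set0Pn; exists w'; rewrite inE w'K2.
    by case/setD1P: w'L'.
  have nK : Kw != K2 by apply: contraNneq nw'K => ->.
  have [s1 c1] := cutK Kw KwC KwL.
  have [s2 c2] := cutK K2 K2C K2L.
  have dj := cut_disj KwC K2C nK.
  have := card_Ev v.
  have : #|cut src tgt Kw :|: cut src tgt K2| <= #|Ev v|.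
    by apply: subset_leq_card; rewrite subUset s1 s2.
  rewrite cardsU.
  have -> : cut src tgt Kw :&: cut src tgt K2 = set0 by apply/eqP; rewrite setI_eq0.
  rewrite cards0 subn0 => h1 h2.
  by have := leq_trans (leq_add c1 c2) (leq_trans h1 h2).
set O := [set K in compsr r0 Y | odd #|K|].
set O' := [set K in compsr r0 Y' | odd #|K|].
have OO' : O \subset O'.
  apply/subsetP => K; rewrite !inE => /andP[KC oK]; rewrite oK andbT.
  have [u uK] := comps_n0 KC.
  have nvK : v \notin K.
    apply/negP => vK; have := comps_inter r0_sym KC LC vK vL => KL.
    by move: oK; rewrite KL (negbTE eL).
  have uY' : u \in Y'.
    rewrite Y'E in_setD1 (subsetP (comps_sub KC) _ uK) andbT.
    by apply: contraNneq nvK => <-.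
  have KE : K = compr r0 Y u := comps_mem r0_sym KC uK.
  apply/imsetP; exists u => //; rewrite KE (@compr_restrict _ r0 Y Y' u) //.
  apply/subsetP => z; rewrite -KE => zK; rewrite Y'E in_setD1 (subsetP (comps_sub KC) _ zK) andbT.
  by apply: contraNneq nvK => <-.
have LvO' : L :\ v \in O'.
  rewrite inE -KwE KwC /= KwE.
  by move: eL; rewrite (cardsD1 v L) vL /= add0n negbK.
have LvO : L :\ v \notin O.
  apply/negP; rewrite inE => /andP[LvC _].
  have := comps_inter r0_sym LvC LC wL' wL => E1.
  by move: vL; rewrite -E1 !inE eqxx.
have : (L :\ v) |: O \subset O' by rewrite subUset sub1set LvO' OO'.
move/subset_leq_card; rewrite cardsU1 LvO.
by rewrite /oddc -/O -/O'.
Qed.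

End Cubic.

Theorem theorem4p1 (V E : finType) (src tgt : E -> V) (X : {set V}) :
  cubic src tgt -> bridgeless src tgt -> #|cut src tgt X| = 6 ->
  has_perfect_matching src tgt X \/
  exists S : {set V},
    [/\ S \subset X,
        independent src tgt S
      & forall v, v \in S -> deg_in src tgt X v = 3] /\
    [/\ forall L, L \in components src tgt (X :\: S) -> odd #|L|,
        #|[set L in components src tgt (X :\: S) | odd #|L|]| = #|S| + 2
      & forall L, L \in components src tgt (X :\: S) -> #|cut src tgt L| = 3].
Proof.
move=> cub bl cX6.
case: (classic (has_perfect_matching src tgt X)) => [h|nh]; [by left | right].
have rs := @r0_sym V E src tgt.
have npm : ~ pm (r0 src tgt) X by move/pm_hpm.
have ntc : ~ tutte_cond X (r0 src tgt) by move/(tutte rs).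
have [S0 [S0X hS0]] : exists S : {set V}, S \subset X /\ #|S| < oddc (r0 src tgt) (X :\: S).
  apply: NNPP => H; apply: ntc => S SX; rewrite leqNgt; apply/negP => lt; apply: H.
  by exists S.
have evX : ~~ odd #|X| by rewrite -(cut_parity cub) cX6.
have par : forall S : {set V}, S \subset X -> odd (oddc (r0 src tgt) (X :\: S)) = odd #|S|.
  move=> S SX; rewrite -(odd_card_comps rs) cardsD (setIidPr SX) oddB ?subset_leq_card //.
  by rewrite (negbTE evX).
pose P (S : {set V}) := (S \subset X) && (#|S| + 2 <= oddc (r0 src tgt) (X :\: S)).
have P0 : P S0.
  rewrite /P S0X /=; move: hS0; rewrite leq_eqVlt => /orP[/eqP E0|]; last by rewrite addn2.
  by move: (par S0 S0X); rewrite -E0 /=; case: (odd #|S0|).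
case: (@arg_maxnP _ S0 P (fun S => #|S|) P0) => S /andP[SX hS] maxS.
have [eo c3 c0 ind deg] := count_main cub bl cX6 SX hS.
have allodd : forall L, L \in compsr (r0 src tgt) (X :\: S) -> odd #|L|.
  move=> L LC; apply/negPn/negP => eL.
  have [S' [S'X cS' hS']] := even_fix cub bl SX LC eL (c0 L LC eL).
  have PS' : P S' by rewrite /P S'X /= cS'; apply: leq_trans hS'; rewrite eo addSn.
  have h := maxS S' PS'; move: h; rewrite cS' /=; by rewrite ltnn.
exists S; split; first by split.
split.
- exact: allodd.
- exact: eo.
- by move=> L LC; apply: c3 => //; apply: allodd.
Qed.
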